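(* Assume that for every $x\in V$ the functions $s\mapsto H(x,s)$ and $s\mapsto f_l(x,s)$ ($l=1,\dots,m$) are nondecreasing, and that $|H(x,s)-H(x,t)|\le|s-t|$ for all $x\in V$, $s,t\in[0,\infty)$. If $(u^1,\dots,u^m)$ and $(v^1,\dots,v^m)$ both solve the discrete system (S), then for every $l=1,\dots,m$, $$\max_{x\in V}\big(\hat{u}^l(x)-\hat{v}^l(x)\big)=\max_{\{x\in V:\ u^l(x)\le v^l(x)\}}\big(\hat{u}^l(x)-\hat{v}^l(x)\big),$$ and, symmetrically, $$\max_{x\in V}\big(\hat{v}^l(x)-\hat{u}^l(x)\big)=\max_{\{x\in V:\ v^l(x)\le u^l(x)\}}\big(\hat{v}^l(x)-\hat{u}^l(x)\big).$$
   Context: Let $G=(V,E)$ be a finite, connected, undirected graph with at least two vertices. For $x,y\in V$, $d(x,y)$ denotes the graph (shortest-path) distance, and $\deg(x)=|\{y\in V:(x,y)\in E\}|$. The boundary of $G$ is $$\partial G=\Big\{x\in V:\ \exists\, y\in V \text{ with } \tfrac{1}{\deg(x)}\textstyle\sum_{(x,z)\in E} d(z,y)<d(x,y)\Big\},$$ and the interior is $G^o=V\setminus\partial G$. For $r:V\to\mathbb{R}$, the mean value at $x$ is $\overline{r}(x)=\frac{1}{\deg(x)}\sum_{(x,y)\in E} r(y)$. Fix an integer $m\ge1$. Let $H:V\times[0,\infty)\to\mathbb{R}$ and $f_l:V\times[0,\infty)\to\mathbb{R}$ ($l=1,\dots,m$) be continuous in the second variable with $H(x,0)=0$ and $f_l(x,0)=0$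 for all $x\in V$; they are extended to negative arguments by $H(x,s)=-H(x,-s)$ and $f_l(x,s)=-f_l(x,-s)$ for $s<0$. Let $\phi^l:\partial G\to[0,\infty)$ ($l=1,\dots,m$) be boundary data satisfying $\phi^i(x)\phi^j(x)=0$ for all $x\in\partial G$ and $i\neq j$. The discrete system (S) for $(u^1,\dots,u^m)$, $u^l:V\to\mathbb{R}$, is: for every $l=1,\dots,m$, $$u^l(x)=\max\Big(H\Big(x,\ \overline{u}^l(x)-\sum_{p\neq l}\overline{u}^p(x)\Big)-f_l\big(x,u^l(x)\big),\ 0\Big)\quad (x\in G^o),\qquad u^l(x)=\phi^l(x)\quad (x\in\partial G).$$ For a vector $(u^1,\dots,u^m)$ we write $\hat{u}^l(x)=u^l(x)-\sum_{p\neq l}u^p(x)$, and similarly $\hat{v}^l$. *)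

(* Defs.v *)
From HB Require Import structures.
From mathcomp Require Import all_boot all_order all_algebra.
From mathcomp Require Import all_classical all_reals all_analysis.
Set Implicit Arguments. Unset Strict Implicit. Unset Printing Implicit Defensive.
Import Order.TTheory GRing.Theory Num.Theory.
Import numFieldNormedType.Exports.
Local Open Scope ring_scope.

Section Graph.
Variable V : finType.
Variable e : rel V.

Fixpoint walkn (n : nat) (x y : V) : bool :=
  if n is k.+1 then [exists z, e x z && walkn k z y] else x == y.

(* graph distance: least n with a walk of length n from x to y
   (in a connected graph this is < #|V|) *)
Definition gdist (x y : V) : nat :=
  find (fun n => walkn n x y) (iota 0 #|V|).

Definition gdeg (x : V) : nat := #|[pred y | e x y]|.

Definition conn_graph : Prop :=
  symmetric e /\ irreflexive e /\ (forall x y, connect e x y) /\ (1 < #|V|)%N.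

Variable R : realType.

Definition in_boundary (x : V) : Prop :=
  exists y : V,
    (\sum_(z | e x z) (gdist z y)%:R) / (gdeg x)%:R < ((gdist x y)%:R : R).

Definition mean (r : V -> R) (x : V) : R :=
  (\sum_(y | e x y) r y) / (gdeg x)%:R.

End Graph.

Definition oddext (R : realType) (h : R -> R) (s : R) : R :=
  if 0 <= s then h s else - h (- s).

Definition uhat (R : realType) (V : Type) (m : nat) (u : 'I_m -> V -> R)
  (l : 'I_m) (x : V) : R :=
  u l x - \sum_(p < m | p != l) u p x.

Definition solves_S (V : finType) (e : rel V) (R : realType) (m : nat)
  (H : V -> R -> R) (f : 'I_m -> V -> R -> R) (phi : 'I_m -> V -> R)
  (u : 'I_m -> V -> R) : Prop :=
  forall (l : 'I_m) (x : V),
    (~ in_boundary e R x ->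
       u l x = Num.max
         (oddext (H x) (mean e (u l) x - \sum_(p < m | p != l) mean e (u p) x)
            - oddext (f l x) (u l x)) 0) /\
    (in_boundary e R x -> u l x = phi l x).

(* Main.v *)
Require Import Defs.
From HB Require Import structures.
From mathcomp Require Import all_boot all_order all_algebra.
From mathcomp Require Import all_classical all_reals all_analysis.
From mathcomp Require Import ring lra zify.
Import Order.TTheory GRing.Theory Num.Theory.
Import numFieldNormedType.Exports.
Local Open Scope ring_scope.

Section Graph.
Variables (V : finType) (e : rel V) (R : realType).

Lemma walk_path p x : path e x p -> walkn e (size p) x (last x p).
Proof.
elim: p x => [|y p IH] x /=; first by rewrite eqxx.
by move=> /andP[exy pth]; apply/existsP; exists y; rewrite exy IH.
Qed.

Lemma conn_walk {x y} : connect e x y -> exists2 n, (n < #|V|)%N & walkn e n x y.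
Proof.
move=> /connectP[p pth ->].
case: (shortenP pth) => p' pth' up' _.
exists (size p'); last by apply: walk_path.
have := max_card (mem (x :: p')); rewrite (card_uniqP up') /=; lia.
Qed.

Lemma gdist_spec {x y n} : (n < #|V|)%N -> walkn e n x y ->
  [/\ (gdist e x y <= n)%N, (gdist e x y < #|V|)%N & walkn e (gdist e x y) x y].
Proof.
move=> hn hw.
have hh : has (fun k => walkn e k x y) (iota 0 #|V|).
  by apply/hasP; exists n => //; rewrite mem_iota.
have hlt : (gdist e x y < #|V|)%N by move: hh; rewrite has_find size_iota.
split => //.
- rewrite leqNgt; apply/negP => hgt.
  have := before_find 0 hgt; rewrite nth_iota // add0n hw //.
- by have := nth_find 0 hh; rewrite nth_iota // add0n.
Qed.

Lemma bd_exists : conn_graph e -> exists b, in_boundary e R b.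
Proof.
move=> [esym [eirr [econn hcard]]].
have [x0 [y0 [_ _ xy0]]] := card_gt1P hcard.
pose F (q : V * V) := gdist e q.1 q.2.
case: (@arg_maxnP _ (x0, y0) predT F isT) => [[x y]] _ hmax.
have hwalk a b : [/\ (gdist e a b < #|V|)%N & walkn e (gdist e a b) a b].
  have [n hn hw] := conn_walk (econn a b).
  by have [] := gdist_spec hn hw.
have D0 : (0 < gdist e x y)%N.
  have h := hmax (x0, y0) isT; rewrite /F /= in h.
  have [_ hw0] := hwalk x0 y0.
  suff : (0 < gdist e x0 y0)%N by lia.
  rewrite lt0n; apply/negP => /eqP h0; rewrite h0 /= in hw0.
  by rewrite hw0 in xy0.
have [_ hw] := hwalk x y.
move: hw D0; case hD : (gdist e x y) => [|k] // hw _.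
move: hw => /= /existsP[z0 /andP[exz0 hwz0]].
have hz0 : (gdist e z0 y <= k)%N.
  have [] := gdist_spec (n:=k) _ hwz0 => //.
  have [] := hwalk x y; rewrite hD; lia.
have hle z : (gdist e z y <= k.+1)%N.
  by have := hmax (z, y) isT; rewrite /F /= hD.
exists x, y.
have hdeg : (0 < gdeg e x)%N by rewrite /gdeg; apply/card_gt0P; exists z0.
have hsum : (\sum_(z | e x z) gdist e z y < gdeg e x * k.+1)%N.
  rewrite /gdeg -sum1_card big_distrl /= (bigD1 z0) //= [X in (_ < X)%N](bigD1 z0) //=.
  rewrite -addSn; apply: leq_add; first by rewrite mul1n ltnS.
  by apply: leq_sum => i /andP[hi _]; rewrite mul1n hle.
rewrite -natr_sum ltr_pdivrMr ?ltr0n // -natrM ltr_nat mulnC hD //.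
Qed.

End Graph.

Section Main.
Variables (V : finType) (e : rel V) (R : realType) (m : nat) (H : V -> R -> R)
  (f : 'I_m -> V -> R -> R) (phi : 'I_m -> V -> R).
Hypothesis H0 : forall x, H x 0 = 0.
Hypothesis f0 : forall l x, f l x 0 = 0.
Hypothesis phi0 : forall l x, in_boundary e R x -> 0 <= phi l x.
Hypothesis Hmono : forall x s t, 0 <= s -> s <= t -> H x s <= H x t.
Hypothesis fmono : forall l x s t, 0 <= s -> s <= t -> f l x s <= f l x t.
Hypothesis Hlip : forall x s t, 0 <= s -> 0 <= t -> `|H x s - H x t| <= `|s - t|.

Lemma Hnn x s : 0 <= s -> 0 <= H x s.
Proof. by move=> hs; rewrite -(H0 x); apply: Hmono. Qed.

Lemma Hle x s : 0 <= s -> H x s <= s.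
Proof.
move=> hs; have := Hlip x _ _ hs (lexx 0); rewrite H0 !subr0 (ger0_norm hs).
by apply: le_trans; apply: ler_norm.
Qed.

Lemma oddH_mono x a b : a <= b -> oddext (H x) a <= oddext (H x) b.
Proof.
move=> ab; rewrite /oddext.
case: (leP 0 a) => ha; case: (leP 0 b) => hb.
- exact: Hmono.
- lra.
- have := Hnn x _ (ltac:(lra) : 0 <= - a); have := Hnn x _ hb; lra.
- rewrite lerN2; apply: Hmono; lra.
Qed.

Lemma oddH_lip x a b : b <= a -> oddext (H x) a - oddext (H x) b <= a - b.
Proof.
move=> ab; rewrite /oddext.
case: (leP 0 a) => ha; case: (leP 0 b) => hb.
- have := Hlip x _ _ ha hb; rewrite (ger0_norm (ltac:(lra) : 0 <= a - b)) => h.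
  exact: le_trans (ler_norm _) h.
- have := Hle x _ ha; have := Hle x _ (ltac:(lra) : 0 <= - b); lra.
- lra.
- have := Hlip x _ _ (ltac:(lra) : 0 <= - b) (ltac:(lra) : 0 <= - a).
  have -> : - b - - a = a - b by ring.
  rewrite (ger0_norm (ltac:(lra) : 0 <= a - b)) => h.
  have := le_trans (ler_norm _) h; lra.
Qed.

Lemma oddH_opp x a : oddext (H x) (- a) = - oddext (H x) a.
Proof.
rewrite /oddext oppr_ge0 opprK.
case: (ltgtP a 0) => ha.
- by rewrite opprK.
- by [].
- by rewrite ha oppr0 H0 oppr0.
Qed.

Lemma oddf_nn l x s : 0 <= s -> oddext (f l x) s = f l x s.
Proof. by move=> hs; rewrite /oddext hs. Qed.

Lemma fnn l x s : 0 <= s -> 0 <= f l x s.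
Proof. by move=> hs; rewrite -(f0 l x); apply: fmono. Qed.

Lemma mean_nn (g : V -> R) x : (forall z, 0 <= g z) -> 0 <= mean e g x.
Proof. by move=> hg; rewrite /mean divr_ge0 // sumr_ge0. Qed.


Lemma max0_pos {y a : R} : y = Num.max a 0 -> 0 < y -> y = a.
Proof.
move=> ->; case: (ler0P a) => h //; by rewrite ltxx.
Qed.

Lemma max0_ge {y a : R} : y = Num.max a 0 -> a <= y.
Proof. by move=> ->; case: (ler0P a). Qed.

Lemma max0_le0 {y a : R} : y = Num.max a 0 -> a <= 0 -> y = 0.
Proof. move=> -> h; case: (ler0P a) => // h2; lra. Qed.

Section Sol.
Variable u : 'I_m -> V -> R.
Hypothesis hu : solves_S e H f phi u.

Definition A (q : 'I_m) (x : V) :=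
  mean e (u q) x - \sum_(p < m | p != q) mean e (u p) x.


Lemma sol_nn q x : 0 <= u q x.
Proof.
have [hb|hb] := pselect (in_boundary e R x).
  by rewrite (proj2 (hu q x) hb); apply: phi0.
rewrite (proj1 (hu q x) hb); by case: ler0P => // h; apply: ltW.
Qed.

Lemma sol_eq {l x} : ~ in_boundary e R x ->
  u l x = Num.max (oddext (H x) (A l x) - f l x (u l x)) 0.
Proof. by move=> hb; rewrite {1}(proj1 (hu l x) hb) oddf_nn //; apply: sol_nn. Qed.


Lemma A_sum p l x : p != l -> A p x + A l x <= 0.
Proof.
move=> pl.
have e1 : \sum_(r < m | r != p) mean e (u r) x = mean e (u l) x +
   \sum_(r < m | (r != p) && (r != l)) mean e (u r) x.
  by rewrite (bigD1 l) // eq_sym.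
have e2 : \sum_(r < m | r != l) mean e (u r) x = mean e (u p) x +
   \sum_(r < m | (r != p) && (r != l)) mean e (u r) x.
  rewrite (bigD1 p) //=; congr (_ + _); apply: eq_bigl => r; by rewrite andbC.
have s0 : 0 <= \sum_(r < m | (r != p) && (r != l)) mean e (u r) x.
  by apply: sumr_ge0 => r _; apply: mean_nn => z; apply: sol_nn.
rewrite /A e1 e2; lra.
Qed.

Lemma C1 l p x : ~ in_boundary e R x -> 0 < u l x -> p != l -> u p x = 0.
Proof.
move=> hb hl pl.
have hfl := fnn l x _ (sol_nn l x); have hfp := fnn p x _ (sol_nn p x).
have hHl : 0 < oddext (H x) (A l x).
  have := max0_pos (sol_eq (l:=l) (x:=x) hb) hl; lra.
have hAp : oddext (H x) (A p x) <= - oddext (H x) (A l x).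
  rewrite -oddH_opp; apply: oddH_mono; have := A_sum _ _ x pl; lra.
apply: max0_le0 (sol_eq (l:=p) (x:=x) hb) _; lra.
Qed.

Lemma C3 l x : ~ in_boundary e R x -> 0 < u l x ->
  uhat u l x = oddext (H x) (A l x) - f l x (u l x).
Proof.
move=> hb hl; rewrite /uhat big1 ?subr0; first exact: max0_pos (sol_eq (l:=l) (x:=x) hb) hl.
by move=> p pl; apply: (C1 _ _ _ hb hl pl).
Qed.

Lemma C2 l x : ~ in_boundary e R x ->
  oddext (H x) (A l x) - f l x (u l x) <= uhat u l x.
Proof.
move=> hb; case: (ltP 0 (u l x)) => hl; first by rewrite C3.
have ul0 : u l x = 0 by apply: le_anti; rewrite hl sol_nn.
have hA : oddext (H x) (A l x) <= 0.
  by have := max0_ge (sol_eq (l:=l) (x:=x) hb); rewrite ul0 f0 subr0.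
rewrite ul0 f0 subr0 /uhat ul0 sub0r.
case: (pselect (exists p, (p != l) && (0 < u p x))) => [[p /andP[pl hp]] | hno].
  rewrite (bigD1 p) //= big1 ?addr0; last first.
    by move=> r /andP[rl rp]; apply: (C1 _ _ _ hb hp rp).
  have hfp := fnn p x _ (sol_nn p x).
  have h1 := max0_pos (sol_eq (l:=p) (x:=x) hb) hp.
  have hAp : oddext (H x) (A p x) <= - oddext (H x) (A l x).
    rewrite -oddH_opp; apply: oddH_mono; have := A_sum _ _ x pl; lra.
  lra.
rewrite big1 ?oppr0 //.
move=> p pl; apply: le_anti; rewrite sol_nn andbT leNgt; apply/negP => hp.
by apply: hno; exists p; rewrite pl hp.
Qed.

End Sol.

Lemma A_mean u l x : A u l x = mean e (uhat u l) x.
Proof.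
rewrite /A /mean /uhat -mulr_suml -mulrBl; congr (_ * _).
by rewrite sumrB; congr (_ - _); rewrite exchange_big.
Qed.

Lemma mean_sub (g h : V -> R) x :
  mean e (fun z => g z - h z) x = mean e g x - mean e h x.
Proof. by rewrite /mean -mulrBl sumrB. Qed.

Lemma nbr_max (g : V -> R) M x : (forall z, g z <= M) -> M <= mean e g x ->
  forall z, e x z -> g z = M.
Proof.
move=> hg hm z exz.
have hd : 0 < (gdeg e x)%:R :> R by rewrite ltr0n /gdeg; apply/card_gt0P; exists z.
move: hm; rewrite /mean ler_pdivlMr // => hm.
have hc : \sum_(y | e x y) M = M * (gdeg e x)%:R.
  by rewrite sumr_const mulr_natr.
have h0 : \sum_(y | e x y) (M - g y) = 0.
  apply: le_anti; rewrite sumr_ge0 ?andbT; last by move=> y _; rewrite subr_ge0.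
  rewrite sumrB hc; lra.
have := psumr_eq0P (fun y _ => (ltac:(rewrite subr_ge0; apply: hg) : 0 <= M - g y)) h0 exz.
lra.
Qed.

Lemma conn_prop (P : V -> Prop) x y : (forall a b, P a -> e a b -> P b) ->
  P x -> connect e x y -> P y.
Proof.
move=> hP hx /connectP[p pth ->]; elim: p x hx pth => [|z p IH] x hx //=.
by move=> /andP[exz pth]; apply: IH pth; exact: hP hx exz.
Qed.

Section Two.
Variables u v : 'I_m -> V -> R.
Hypothesis hu : solves_S e H f phi u.
Hypothesis hv : solves_S e H f phi v.

Lemma key l x : ~ in_boundary e R x -> v l x < u l x ->
  uhat u l x - uhat v l x <= oddext (H x) (A u l x) - oddext (H x) (A v l x).
Proof.
move=> hb h.
have hul : 0 < u l x := le_lt_trans (sol_nn _ hv l x) h.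
rewrite (C3 _ hu _ _ hb hul); have := C2 _ hv l x hb.
have := fmono l x _ _ (sol_nn _ hv l x) (ltW h); lra.
Qed.

Lemma main_half : conn_graph e -> forall l,
  exists2 x0, u l x0 <= v l x0 &
       forall x, uhat u l x - uhat v l x <= uhat u l x0 - uhat v l x0.
Proof.
move=> hc l; set w := fun z => uhat u l z - uhat v l z.
have econn := proj1 (proj2 (proj2 hc)).
have [b hb] := @bd_exists _ e R hc.
have bdeq z : in_boundary e R z -> forall q, u q z = v q z.
  by move=> hz q; rewrite (proj2 (hu q z) hz) (proj2 (hv q z) hz).
have wb : w b = 0.
  rewrite /w /uhat; apply/eqP; rewrite subr_eq0; apply/eqP.
  congr (_ - _); [exact: bdeq | apply: eq_bigr => q _; exact: bdeq].
have [x1 _ hx1] := @arg_maxP _ R V b predT w isT.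
set M := w x1 in hx1.
have hx1' : forall y, w y <= M by move=> y; exact: hx1.
case: (pselect (exists2 x0, u l x0 <= v l x0 & w x0 = M)) => [[x0 h1 h2]|hno].
  by exists x0 => // x; rewrite -/(w x) -/(w x0) h2; apply: hx1.
exfalso.
have hbM : w b = M -> False.
  by move=> hbm; apply: hno; exists b => //; rewrite bdeq.
have closed : forall z z', w z = M -> e z z' -> w z' = M.
  move=> z z' hz ezz'.
  have hlt : v l z < u l z by rewrite ltNge; apply/negP => h; apply: hno; exists z.
  have hzb : ~ in_boundary e R z.
    by move=> hzb; move: hlt; rewrite bdeq // ltxx.
  have hk := key l z hzb hlt.
  case: (leP (A v l z) (A u l z)) => hA.
  - have hl := oddH_lip z _ _ hA.
    have hm : M <= mean e w z.
      by rewrite /w mean_sub -!A_mean; rewrite -hz; rewrite /w; lra.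
    by have := @nbr_max w M z hx1' hm z' ezz'.
  - have := oddH_mono z _ _ (ltW hA); have := hx1' b; move: hk.
    rewrite -/(w z) hz => hk h1 h2; exfalso; apply: hbM; lra.
apply: hbM; exact: (@conn_prop (fun z => w z = M) x1 b closed (erefl M) (econn x1 b)).
Qed.

End Two.
End Main.

Local Open Scope classical_set_scope.

Theorem lemma3 (V : finType) (e : rel V) (R : realType) (m : nat)
  (H : V -> R -> R) (f : 'I_m -> V -> R -> R) (phi : 'I_m -> V -> R)
  (u v : 'I_m -> V -> R) :
  conn_graph e ->
  (0 < m)%N ->
  (forall x, {within [set s : R | 0 <= s], continuous (H x)}) ->
  (forall l x, {within [set s : R | 0 <= s], continuous (f l x)}) ->
  (forall x, H x 0 = 0) ->
  (forall l x, f l x 0 = 0) ->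
  (forall l x, in_boundary e R x -> 0 <= phi l x) ->
  (forall i j x, i != j -> in_boundary e R x -> phi i x * phi j x = 0) ->
  (forall x s t, 0 <= s -> s <= t -> H x s <= H x t) ->
  (forall l x s t, 0 <= s -> s <= t -> f l x s <= f l x t) ->
  (forall x s t, 0 <= s -> 0 <= t -> `|H x s - H x t| <= `|s - t|) ->
  solves_S e H f phi u ->
  solves_S e H f phi v ->
  forall l : 'I_m,
    (exists2 x0, u l x0 <= v l x0 &
       forall x, uhat u l x - uhat v l x <= uhat u l x0 - uhat v l x0) /\
    (exists2 x0, v l x0 <= u l x0 &
       forall x, uhat v l x - uhat u l x <= uhat v l x0 - uhat u l x0).
Proof.
move=> hc _ _ _ hH0 hf0 hphi _ hmon hfmon hlip hu hv l; split.
- exact: (@main_half _ _ _ _ _ _ _ hH0 hf0 hphi hmon hfmon hlip _ _ hu hv hc l).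
- exact: (@main_half _ _ _ _ _ _ _ hH0 hf0 hphi hmon hfmon hlip _ _ hv hu hc l).
Qed.
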